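(* Let $\alpha=(\alpha_1,\dots,\alpha_t)$ be palindromic (i.e. $\alpha_i=\alpha_{t+1-i}$ for all $i$) with $t$ odd, let $F=\breve F(\alpha)$ with elements $x_1,\dots,x_n$ and shared elements $s_1,\dots,s_{t-1}$. Assume that $\chi_{s_i}-\chi_{s_{t-i}}$ is $0$-mesic under rowmotion for all $i\in[t-1]$. Then (1) $\chi_{x_k}-\chi_{x_{n-k+1}}$ is $0$-mesic for all $k\in[n]$, and (2) $\hat\chi_{x_k}+\hat\chi_{x_{n-k+1}}$ is $1$-mesic for all $k\in[n]$.
   Context: A fence $\breve F(\alpha_1,\dots,\alpha_t)$ ($t\ge2$, positive integers, $\alpha_1,\alpha_t\ge2$) is the poset on $\{x_1,\dots,x_n\}$, $n=\alpha_1+\dots+\alpha_t-1$, with $a_i=\alpha_1+\dots+\alpha_i$, $a_0=0$, whose cover relations are: for $1\le j\le n-1$ with $a_{i-1}\le j<a_i$, $x_j\lessdot x_{j+1}$ if $i$ odd and $x_j\gtrdot x_{j+1}$ if $i$ even. Shared elements: $s_i=x_{a_i}$. $\mathcal J(F)$ is the set of order ideals; rowmotion $\rho:\mathcal J(F)\to\mathcal J(F)$ sends $I$ to the order ideal generated by $\min(F\setminus I)$. $\hat\chi_q(I)=1$ if $q\in I$, else 0; $\chi_q(I)=1$ if $q\in\max(I)$, else 0. A statistic $f:\mathcal J(F)\to\mathbb R$ is $c$-mesic under rowmotion if its average over every $\rho$-orbit equals $c$. *)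

(* Defs.v *)
From mathcomp Require Import all_boot all_order all_algebra.

Import GRing.Theory Num.Theory.
Local Open Scope ring_scope.

(* A composition alpha = (alpha_1,...,alpha_t) is a seq nat (alpha_i = nth 0 alpha (i-1)). *)

Definition fence_data (alpha : seq nat) : Prop :=
  [/\ (2 <= size alpha)%N, all (fun a => 0 < a)%N alpha,
      (2 <= head 0 alpha)%N & (2 <= last 0 alpha)%N].

Definition fence_n (alpha : seq nat) : nat := (sumn alpha).-1.

Definition fa (alpha : seq nat) (i : nat) : nat := sumn (take i alpha).

(* Elements: x_k (1 <= k <= n) is the ordinal k-1 of 'I_(fence_n alpha). *)
Notation elt alpha := ('I_(fence_n alpha)).

(* For a label j with a_{i-1} <= j < a_i: i odd gives x_j <. x_{j+1}, i even x_j >. x_{j+1}. *)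
Definition upstep (alpha : seq nat) (j : nat) : bool :=
  [exists i : 'I_(size alpha).+1,
     [&& (0 < (i : nat))%N, (fa alpha (i.-1) <= j)%N, (j < fa alpha i)%N & odd i]].
Definition downstep (alpha : seq nat) (j : nat) : bool :=
  [exists i : 'I_(size alpha).+1,
     [&& (0 < (i : nat))%N, (fa alpha (i.-1) <= j)%N, (j < fa alpha i)%N & ~~ odd i]].

Definition lessdot (alpha : seq nat) : rel (elt alpha) :=
  fun y z =>
    (((z : nat) == y.+1) && upstep alpha y.+1) ||
    (((y : nat) == z.+1) && downstep alpha z.+1).

Definition fle (alpha : seq nat) (y z : elt alpha) : bool := connect (lessdot alpha) y z.

Definition is_ideal (alpha : seq nat) (I : {set elt alpha}) : bool :=
  [forall y, forall z, (fle alpha y z && (z \in I)) ==> (y \in I)].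

Definition minset_of (alpha : seq nat) (S : {set elt alpha}) : {set elt alpha} :=
  [set m in S | [forall z, ((z \in S) && fle alpha z m) ==> (z == m)]].
Definition maxset_of (alpha : seq nat) (S : {set elt alpha}) : {set elt alpha} :=
  [set m in S | [forall z, ((z \in S) && fle alpha m z) ==> (z == m)]].

Definition rowmotion (alpha : seq nat) (I : {set elt alpha}) : {set elt alpha} :=
  [set y | [exists m in minset_of alpha (~: I), fle alpha y m]].

(* chi_{x_k}(I) = 1 iff x_k in max(I); hatchi_{x_k}(I) = 1 iff x_k in I (k is the 1-based label) *)
Definition chi (alpha : seq nat) (k : nat) (I : {set elt alpha}) : rat :=
  ([exists m : elt alpha, ((m : nat).+1 == k) && (m \in maxset_of alpha I)] : nat)%:R.
Definition hatchi (alpha : seq nat) (k : nat) (I : {set elt alpha}) : rat :=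
  ([exists m : elt alpha, ((m : nat).+1 == k) && (m \in I)] : nat)%:R.

Definition mesic (alpha : seq nat) (f : {set elt alpha} -> rat) (c : rat) : Prop :=
  forall I : {set elt alpha}, is_ideal alpha I ->
    (\sum_(J <- fingraph.orbit (@rowmotion alpha) I) f J)
      / (size (fingraph.orbit (@rowmotion alpha) I))%:R = c.

(* Main.v *)
Require Import Defs.
From mathcomp Require Import all_boot all_order all_algebra.
From mathcomp Require Import zify ring lra.
Import GRing.Theory Num.Theory.
Local Open Scope ring_scope.
Set Implicit Arguments.
Unset Strict Implicit.

Lemma fa_mono (alpha : seq nat) i j : (i <= j)%N -> (fa alpha i <= fa alpha j)%N.
Proof.
rewrite /fa; elim: alpha i j => [|a s IH] [|i] [|j] //=.
by rewrite ltnS => hij; rewrite leq_add2l IH.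
Qed.

Lemma up_dn_excl (alpha : seq nat) j : ~~ (upstep alpha j && downstep alpha j).
Proof.
apply/negP=> /andP[/existsP[i /and4P[i0 h1 h2 oi]] /existsP[i' /and4P[i0' h1' h2' oi']]].
case: (ltngtP i i') => [lt|gt|eq].
- have : (fa alpha i <= fa alpha (i'.-1))%N by apply: fa_mono; lia.
  lia.
- have : (fa alpha i' <= fa alpha (i.-1))%N by apply: fa_mono; lia.
  lia.
- by move: oi oi'; rewrite eq => ->.
Qed.

Lemma seg_type (alpha : seq nat) j i : (0 < i <= size alpha)%N ->
  (fa alpha i.-1 <= j < fa alpha i)%N -> upstep alpha j = odd i.
Proof.
move=> /andP[i0 it] /andP[h1 h2].
have ilt : (i < (size alpha).+1)%N by lia.
case oi: (odd i).
  by apply/existsP; exists (Ordinal ilt); rewrite /= i0 h1 h2 oi.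
have : downstep alpha j.
  by apply/existsP; exists (Ordinal ilt); rewrite /= i0 h1 h2 oi.
by move=> d; apply/negbTE/negP => u; move: (up_dn_excl alpha j); rewrite u d.
Qed.

Lemma seg_exists (alpha : seq nat) j : (j < sumn alpha)%N ->
  exists i, (0 < i <= size alpha)%N /\ (fa alpha i.-1 <= j < fa alpha i)%N.
Proof.
move=> hj.
have ex : exists i, (j < fa alpha i)%N by exists (size alpha); rewrite /fa take_size.
case: (ex_minnP ex) => i Hi Hmin.
have i0 : (0 < i)%N by case: i Hi {Hmin} => //; rewrite /fa take0.
exists i; split.
  rewrite i0 /=; apply: Hmin; by rewrite /fa take_size.
rewrite Hi andbT leqNgt; apply/negP => /Hmin; lia.
Qed.

Lemma dn_not_up (alpha : seq nat) j : (j < sumn alpha)%N ->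
  downstep alpha j = ~~ upstep alpha j.
Proof.
move=> /seg_exists [i [hi hj]].
have e := @seg_type alpha j i hi hj.
move: hi hj => /andP[i0 it] /andP[h1 h2].
have ilt : (i < (size alpha).+1)%N by lia.
case oi: (odd i) => /=; rewrite e oi /=.
  by apply/negbTE/negP => d; move: (up_dn_excl alpha j); rewrite d e oi.
by apply/existsP; exists (Ordinal ilt); rewrite /= i0 h1 h2 oi.
Qed.
Lemma pal_rev (alpha : seq nat) :
  (forall i : nat, (i < size alpha)%N ->
     nth 0%N alpha i = nth 0%N alpha (size alpha - 1 - i)) -> rev alpha = alpha.
Proof.
move=> H; apply: (@eq_from_nth _ 0%N); rewrite ?size_rev // => i hi.
by rewrite nth_rev // (H i hi); congr (nth _ _ _); lia.
Qed.

Lemma fa_mirror (alpha : seq nat) : rev alpha = alpha -> forall i, (i <= size alpha)%N ->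
  (fa alpha (size alpha - i) + fa alpha i = sumn alpha)%N.
Proof.
move=> Hr i hi; rewrite /fa.
have hd : drop (size alpha - i) alpha = rev (take i alpha).
  by rewrite -{2}Hr drop_rev subKn.
have := congr1 sumn (cat_take_drop (size alpha - i) alpha).
by rewrite sumn_cat hd sumn_rev => <-.
Qed.

Lemma fa_le_sum (alpha : seq nat) i : (fa alpha i <= sumn alpha)%N.
Proof.
by rewrite /fa -{2}(cat_take_drop i alpha) sumn_cat leq_addr.
Qed.

Lemma fa_size (alpha : seq nat) : fa alpha (size alpha) = sumn alpha.
Proof. by rewrite /fa take_size. Qed.

Lemma up_mirror (alpha : seq nat) : rev alpha = alpha -> odd (size alpha) ->
  (0 < sumn alpha)%N ->
  forall j, (j <= fence_n alpha)%N -> upstep alpha (fence_n alpha - j) = upstep alpha j.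
Proof.
move=> Hr Ho S0 j; rewrite /fence_n => hj.
have hjS : (j < sumn alpha)%N by lia.
case: (@seg_exists alpha j hjS) => i [hi hs].
rewrite (@seg_type alpha j i hi hs).
have hi' : (0 < (size alpha - i).+1 <= size alpha)%N by lia.
have m1 := @fa_mirror alpha Hr i (ltac:(lia)).
have m2 := @fa_mirror alpha Hr i.-1 (ltac:(lia)).
have e : (size alpha - i.-1 = (size alpha - i).+1)%N by lia.
rewrite e in m2.
have hs' : (fa alpha (size alpha - i).+1.-1 <= (sumn alpha).-1 - j < fa alpha (size alpha - i).+1)%N.
  rewrite /=; lia.
rewrite (@seg_type alpha _ _ hi' hs') oddS oddB; last by lia.
by rewrite Ho; case: (odd i).
Qed.

Lemma lessdot_iff (alpha : seq nat) (y z : elt alpha) :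
  lessdot alpha y z =
  (((z : nat) == y.+1) && upstep alpha y.+1) || (((y : nat) == z.+1) && ~~ upstep alpha z.+1).
Proof.
rewrite /lessdot dn_not_up //.
have := ltn_ord z; rewrite /fence_n; lia.
Qed.

Lemma fle_inv (alpha : seq nat) (y z : elt alpha) : fle alpha y z ->
  forall j : nat, ((y <= j < z)%N -> upstep alpha j.+1) /\ ((z <= j < y)%N -> downstep alpha j.+1).
Proof.
move/connectP => [p hp ->] {z}.
elim: p y hp => [|w p IH] y /=.
  by move=> _ j; split => h; lia.
move=> /andP[hyw hp] j.
have [IH1 IH2] := IH w hp j.
move: (nat_of_ord (last w p)) IH1 IH2 => L IH1 IH2.
move: hyw; rewrite /lessdot => /orP[/andP[/eqP e u]|/andP[/eqP e d]].
  have {}e : (w : nat) = (y : nat).+1 := e; split => hj.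
  - case: (j =P y) => [->//|ne]; apply: IH1; lia.
  - apply: IH2; lia.
have {}e : (y : nat) = (w : nat).+1 := e; split => hj.
  - apply: IH1; lia.
  - case: (j =P w) => [->//|ne]; apply: IH2; lia.
Qed.

Lemma fle_antisym (alpha : seq nat) (y z : elt alpha) :
  fle alpha y z -> fle alpha z y -> y = z.
Proof.
move=> h1 h2; apply/val_inj => /=.
have H1 := fle_inv h1; have H2 := fle_inv h2.
case: (ltngtP y z) => // [lt|gt].
- have u := (H1 y).1 (ltac:(lia)); have d := (H2 y).2 (ltac:(lia)).
  by move: (up_dn_excl alpha y.+1); rewrite u d.
- have u := (H2 z).1 (ltac:(lia)); have d := (H1 z).2 (ltac:(lia)).
  by move: (up_dn_excl alpha z.+1); rewrite u d.
Qed.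

Lemma fle_refl (alpha : seq nat) (y : elt alpha) : fle alpha y y.
Proof. exact: connect0. Qed.

Lemma fle_trans (alpha : seq nat) (x y z : elt alpha) :
  fle alpha x y -> fle alpha y z -> fle alpha x z.
Proof. exact: connect_trans. Qed.

Lemma lessdot_fle (alpha : seq nat) (y z : elt alpha) : lessdot alpha y z -> fle alpha y z.
Proof. exact: connect1. Qed.

Lemma lessdot_irr (alpha : seq nat) (y : elt alpha) : lessdot alpha y y = false.
Proof.
rewrite /lessdot; apply/negbTE; rewrite negb_or !negb_and.
by rewrite (_ : ((y : nat) == y.+1) = false) ?(introF eqP) //; lia.
Qed.

Lemma idealP (alpha : seq nat) (I : {set elt alpha}) y z :
  is_ideal alpha I -> fle alpha y z -> z \in I -> y \in I.
Proof.
move=> /forallP /(_ y) /forallP /(_ z) h hyz hz.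
by move: h; rewrite hyz hz.
Qed.

Lemma max_char (alpha : seq nat) (I : {set elt alpha}) m : is_ideal alpha I ->
  (m \in maxset_of alpha I) = (m \in I) && [forall w, lessdot alpha m w ==> (w \notin I)].
Proof.
move=> hI; rewrite /maxset_of inE; congr (_ && _).
apply/forallP/forallP => h w.
- apply/implyP => hmw; apply/negP => wI.
  have := h w; rewrite wI lessdot_fle //= => /eqP ewm.
  by move: hmw; rewrite ewm lessdot_irr.
- apply/implyP => /andP[wI /connectP [p hp ew]].
  case: p hp ew => [|v p] /=; first by move=> _ ->.
  move=> /andP[hmv hp] ew.
  have vI : v \in I.
    apply: (idealP hI _ wI); rewrite ew; apply/connectP; by exists p.
  by have := h v; rewrite hmv vI.
Qed.

Lemma min_char (alpha : seq nat) (I : {set elt alpha}) m : is_ideal alpha I ->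
  (m \in minset_of alpha (~: I)) = (m \notin I) && [forall w, lessdot alpha w m ==> (w \in I)].
Proof.
move=> hI; rewrite /minset_of !inE; congr (_ && _).
apply/forallP/forallP => h w.
- apply/implyP => hwm; apply/negPn/negP => wI.
  have := h w; rewrite !inE wI lessdot_fle //= => /eqP ewm.
  by move: hwm; rewrite ewm lessdot_irr.
- apply/implyP => /andP[]; rewrite inE => wI /connectP [p hp em].
  move: hp em; case/lastP: p => [|p v] /=; first by move=> _ ->.
  rewrite rcons_path last_rcons => /andP[hp hlv] ev.
  have := h (last w p); rewrite ev hlv /= => lI.
  have : w \in I.
    apply: (idealP hI _ lI); apply/connectP; by exists p.
  by rewrite (negbTE wI).
Qed.

Lemma rowmotion_ideal (alpha : seq nat) (I : {set elt alpha}) : is_ideal alpha (rowmotion alpha I).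
Proof.
apply/forallP => y; apply/forallP => z; apply/implyP => /andP[hyz].
rewrite /rowmotion !inE => /existsP [m /andP[hm hzm]].
by apply/existsP; exists m; rewrite hm (fle_trans hyz hzm).
Qed.

Lemma rowmotion_max (alpha : seq nat) (I : {set elt alpha}) m :
  (m \in maxset_of alpha (rowmotion alpha I)) = (m \in minset_of alpha (~: I)).
Proof.
apply/idP/idP.
- rewrite /maxset_of inE => /andP[]; rewrite /rowmotion inE => /existsP[m' /andP[hm' hmm']].
  move=> /forallP /(_ m'); rewrite hmm' andbT inE.
  have -> : [exists m0 in minset_of alpha (~: I), fle alpha m' m0].
    by apply/existsP; exists m'; rewrite hm' fle_refl.
  by move=> /= /eqP <-.
- move=> hm; rewrite /maxset_of inE; apply/andP; split.
    by rewrite /rowmotion inE; apply/existsP; exists m; rewrite hm fle_refl.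
  apply/forallP => z; apply/implyP => /andP[]; rewrite /rowmotion inE.
  move=> /existsP[m' /andP[hm' hzm']] hmz.
  have emm' : m = m'.
    move: hm'; rewrite /minset_of inE => /andP[_ /forallP /(_ m)].
    move: hm; rewrite /minset_of inE => /andP[-> _].
    by rewrite (fle_trans hmz hzm') /= => /eqP.
  apply/eqP; apply: fle_antisym => //; by rewrite emm'.
Qed.

Lemma exists_min (alpha : seq nat) (S : {set elt alpha}) x : x \in S ->
  exists2 m, m \in minset_of alpha S & fle alpha m x.
Proof.
move=> xS.
have xA : x \in [pred m | (m \in S) && fle alpha m x] by rewrite inE xS fle_refl.
case: (arg_minnP (fun m => #|[set w | fle alpha w m]|) xA) => m /andP[mS hmx] hmin.
exists m => //.
rewrite /minset_of inE mS /=; apply/forallP => z; apply/implyP => /andP[zS hzm].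
have hc := hmin z (ltac:(by apply/andP; split; [|apply: fle_trans hzm hmx])).
have sub : [set w | fle alpha w z] \subset [set w | fle alpha w m].
  by apply/subsetP => w; rewrite !inE => hw; apply: fle_trans hw hzm.
have : [set w | fle alpha w z] == [set w | fle alpha w m] by rewrite eqEcard sub hc.
move=> /eqP /setP /(_ m); rewrite !inE fle_refl => hmz.
by apply/eqP; apply: fle_antisym.
Qed.

Lemma rowmotion_inj (alpha : seq nat) (I J : {set elt alpha}) :
  is_ideal alpha I -> is_ideal alpha J -> rowmotion alpha I = rowmotion alpha J -> I = J.
Proof.
move=> hI hJ e.
have em : forall m, (m \in minset_of alpha (~: I)) = (m \in minset_of alpha (~: J)).
  by move=> m; rewrite -!rowmotion_max e.
have key : forall (K : {set elt alpha}), is_ideal alpha K -> forall x,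
    (x \notin K) = [exists m in minset_of alpha (~: K), fle alpha m x].
  move=> K hK x; apply/idP/idP.
  - move=> hx; have [m hm hmx] := exists_min (x:=x) (S:=~: K) (ltac:(by rewrite inE)).
    by apply/existsP; exists m; rewrite hm hmx.
  - move=> /existsP[m /andP[hm hmx]]; apply/negP => xK.
    move: hm; rewrite /minset_of !inE => /andP[/negP mK _]; apply: mK.
    exact: idealP hK hmx xK.
apply/setP => x; apply/negb_inj; rewrite (key I hI) (key J hJ).
by apply/existsP/existsP => [[m]|[m]]; exists m; rewrite ?em // -em.
Qed.

Lemma map_traject (T : Type) (f : T -> T) x n :
  map f (traject f x n) = traject f (f x) n.
Proof. by elim: n x => //= n IH x; rewrite IH. Qed.

Lemma orbit_ideal (alpha : seq nat) (I J : {set elt alpha}) : is_ideal alpha I ->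
  J \in fingraph.orbit (@rowmotion alpha) I -> is_ideal alpha J.
Proof.
rewrite /fingraph.orbit => hI /trajectP [i _ ->]; case: i => [|i] //=.
exact: rowmotion_ideal.
Qed.

Lemma iter_order_rho (alpha : seq nat) (I : {set elt alpha}) : is_ideal alpha I ->
  iter (order (@rowmotion alpha) I) (@rowmotion alpha) I = I.
Proof.
move=> hI.
apply: (@iter_order_in _ (@rowmotion alpha) [pred J | is_ideal alpha J]) => //.
- by move=> x _; exact: rowmotion_ideal.
- by move=> x y hx hy; exact: rowmotion_inj.
Qed.

Lemma orbit_shift (alpha : seq nat) (I : {set elt alpha}) (F : {set elt alpha} -> rat) :
  is_ideal alpha I ->
  \sum_(J <- fingraph.orbit (@rowmotion alpha) I) F (rowmotion alpha J) =
  \sum_(J <- fingraph.orbit (@rowmotion alpha) I) F J.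
Proof.
move=> hI; rewrite /fingraph.orbit.
have := iter_order_rho hI; have := order_gt0 (@rowmotion alpha) I.
case: (order (@rowmotion alpha) I) => // m _ hit.
rewrite -(big_map (@rowmotion alpha) predT F) map_traject trajectSr -iterSr hit.
by rewrite big_rcons trajectS big_cons /= addrC.
Qed.

Definition lab (alpha : seq nat) (P : pred (elt alpha)) (l : nat) : bool :=
  [exists m : elt alpha, ((m : nat).+1 == l) && P m].

Definition inJ (alpha : seq nat) (J : {set elt alpha}) (l : nat) : bool :=
  (l == 0%N) || lab (fun m => m \in J) l.

Lemma lab_ord (alpha : seq nat) (P : pred (elt alpha)) (m : elt alpha) : lab P m.+1 = P m.
Proof.
apply/existsP/idP => [[w /andP[/eqP e Pw]]|Pm].
  by have -> : m = w by apply/val_inj; case: e.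
by exists m; rewrite eqxx.
Qed.

Lemma lab_top (alpha : seq nat) (P : pred (elt alpha)) : lab P (fence_n alpha).+1 = false.
Proof.
apply/negbTE/existsP => [[w /andP[/eqP e _]]].
by have := ltn_ord w; case: e => ->; rewrite ltnn.
Qed.

Lemma up_nbrs (alpha : seq nat) (P : pred (elt alpha)) (m : elt alpha) :
  [forall w, lessdot alpha m w ==> ~~ P w] =
  (upstep alpha m.+1 ==> ~~ lab P m.+2) && (upstep alpha m || ~~ lab P m).
Proof.
apply/forallP/andP => [h|[h1 h2] w].
- split.
    apply/implyP => u; apply/negP => /existsP [w /andP[/eqP ew Pw]].
    have := h w; rewrite lessdot_iff.
    have -> : ((w : nat) == m.+1) by apply/eqP; case: ew.
    by rewrite u /= Pw.
  case um: (upstep alpha m) => //=.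
  apply/negP => /existsP [w /andP[/eqP ew Pw]].
  have := h w; rewrite lessdot_iff ew eqxx um /= orbT /= Pw.
  done.
- apply/implyP; rewrite lessdot_iff => /orP[/andP[/eqP e u]|/andP[/eqP e nu]].
    have := implyP h1 u; apply: contra => Pw.
    by apply/existsP; exists w; rewrite e eqxx Pw.
  rewrite -e in nu; move: h2; rewrite (negbTE nu) /=; apply: contra => Pw.
  by apply/existsP; exists w; rewrite e eqxx Pw.
Qed.

Lemma low_nbrs (alpha : seq nat) (P : pred (elt alpha)) (m : elt alpha) :
  upstep alpha (fence_n alpha) ->
  [forall w, lessdot alpha w m ==> P w] =
  (upstep alpha m ==> ((m : nat) == 0%N) || lab P m) && (upstep alpha m.+1 || lab P m.+2).
Proof.
move=> hn.
apply/forallP/andP => [h|[h1 h2] w].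
- split.
    apply/implyP => u; case m0: ((m : nat) == 0%N) => //=.
    have lt : ((m : nat).-1 < fence_n alpha)%N by have := ltn_ord m; lia.
    apply/existsP; exists (Ordinal lt); rewrite /=.
    have e : ((m : nat).-1.+1 = m)%N by move/negbT: m0; lia.
    rewrite e eqxx /=.
    have := h (Ordinal lt); rewrite lessdot_iff /= e eqxx u /=.
    done.
  case u1: (upstep alpha m.+1) => //=.
  have lt : ((m : nat).+1 < fence_n alpha)%N.
    have := ltn_ord m; rewrite leq_eqVlt => /orP[/eqP e|] //.
    by move: u1; rewrite e hn.
  apply/existsP; exists (Ordinal lt); rewrite /= eqxx /=.
  have := h (Ordinal lt); rewrite lessdot_iff /= eqxx u1 /= orbT.
  done.
- apply/implyP; rewrite lessdot_iff => /orP[/andP[/eqP e u]|/andP[/eqP e nu]].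
    rewrite -e in u; move: (implyP h1 u); rewrite e /= => hl.
    by move: hl; rewrite lab_ord.
  move: h2; rewrite (negbTE nu) /= -e lab_ord.
  done.
Qed.

Lemma chi_lab (alpha : seq nat) (J : {set elt alpha}) (m : elt alpha) :
  chi alpha m.+1 J = ((m \in maxset_of alpha J) : nat)%:R.
Proof. by rewrite /chi; have := lab_ord (fun w => w \in maxset_of alpha J) m; rewrite /lab => ->. Qed.

Lemma inJ_ord (alpha : seq nat) (J : {set elt alpha}) (m : elt alpha) :
  inJ J m.+1 = (m \in J).
Proof. by rewrite /inJ /= lab_ord. Qed.

Lemma bool_cases (b1 B0 B2 Z u0 u1 : bool) :
  (Z -> u0) ->
  (b1 -> (u0 ==> Z || B0) && (u1 || B2)) ->
  (~~ b1 -> (u1 ==> ~~ B2) && (u0 || ~~ B0)) ->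
  let c := ((b1 && ((u1 ==> ~~ B2) && (u0 || ~~ B0))) : nat)%:R : rat in
  let p := ((~~ b1 && ((u0 ==> Z || B0) && (u1 || B2))) : nat)%:R : rat in
  let a0 := ((Z || B0) : nat)%:R : rat in
  let a1 := (b1 : nat)%:R : rat in
  let a2 := (B2 : nat)%:R : rat in
  (u0 -> u1 -> c = a1 - a2 /\ p = a0 - a1) /\
  (~~ u0 -> ~~ u1 -> c = a1 - a0 /\ p = a2 - a1) /\
  (u0 -> ~~ u1 -> c = a1) /\
  (~~ u0 -> u1 -> p = 1 - a1).
Proof.
case: b1; case: B0; case: B2; case: Z; case: u0; case: u1 => /= hZ h1 h2;
  try (by move: (hZ isT)); try (by move: (h1 isT)); try (by move: (h2 isT));
  do ! split => //= *; try lra.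
Qed.

Lemma local_id (alpha : seq nat) (J : {set elt alpha}) (m : elt alpha) :
  is_ideal alpha J -> upstep alpha 0 -> upstep alpha (fence_n alpha) ->
  (upstep alpha m -> upstep alpha m.+1 ->
     chi alpha m.+1 J = (inJ J m.+1 : nat)%:R - (inJ J m.+2 : nat)%:R /\
     chi alpha m.+1 (rowmotion alpha J) = (inJ J m : nat)%:R - (inJ J m.+1 : nat)%:R) /\
  (~~ upstep alpha m -> ~~ upstep alpha m.+1 ->
     chi alpha m.+1 J = (inJ J m.+1 : nat)%:R - (inJ J m : nat)%:R /\
     chi alpha m.+1 (rowmotion alpha J) = (inJ J m.+2 : nat)%:R - (inJ J m.+1 : nat)%:R) /\
  (upstep alpha m -> ~~ upstep alpha m.+1 ->
     chi alpha m.+1 J = (inJ J m.+1 : nat)%:R) /\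
  (~~ upstep alpha m -> upstep alpha m.+1 ->
     chi alpha m.+1 (rowmotion alpha J) = 1 - (inJ J m.+1 : nat)%:R).
Proof.
move=> hJ h0 hn.
have hZ : ((m : nat) == 0%N) -> upstep alpha m by move=> /eqP ->.
have c1 : m \in J -> (upstep alpha m ==> ((m : nat) == 0%N) || lab (fun w => w \in J) m) &&
                     (upstep alpha m.+1 || lab (fun w => w \in J) m.+2).
  move=> mJ; rewrite -low_nbrs //; apply/forallP => w; apply/implyP => hwm.
  exact: idealP hJ (lessdot_fle hwm) mJ.
have c2 : m \notin J -> (upstep alpha m.+1 ==> ~~ lab (fun w => w \in J) m.+2) &&
                     (upstep alpha m || ~~ lab (fun w => w \in J) m).
  move=> mJ; rewrite -(up_nbrs (fun w => w \in J)); apply/forallP => w; apply/implyP => hmw.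
  by apply: contra mJ => wJ; exact: idealP hJ (lessdot_fle hmw) wJ.
have B := bool_cases hZ c1 c2.
rewrite !chi_lab rowmotion_max max_char // min_char // (up_nbrs (fun w => w \in J)) low_nbrs //.
rewrite inJ_ord.
exact: B.
Qed.

Definition Hs (alpha : seq nat) (I : {set elt alpha}) (l : nat) : rat :=
  \sum_(J <- fingraph.orbit (@rowmotion alpha) I) (inJ J l : nat)%:R.
Definition Cs (alpha : seq nat) (I : {set elt alpha}) (l : nat) : rat :=
  \sum_(J <- fingraph.orbit (@rowmotion alpha) I) chi alpha l J.
Definition Ls (alpha : seq nat) (I : {set elt alpha}) : rat :=
  \sum_(J <- fingraph.orbit (@rowmotion alpha) I) (1 : rat).

Lemma orbit_id (alpha : seq nat) (I : {set elt alpha}) (m : elt alpha) :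
  is_ideal alpha I -> upstep alpha 0 -> upstep alpha (fence_n alpha) ->
  (upstep alpha m -> upstep alpha m.+1 ->
     Cs I m.+1 = Hs I m.+1 - Hs I m.+2 /\ Cs I m.+1 = Hs I m - Hs I m.+1) /\
  (~~ upstep alpha m -> ~~ upstep alpha m.+1 ->
     Cs I m.+1 = Hs I m.+1 - Hs I m /\ Cs I m.+1 = Hs I m.+2 - Hs I m.+1) /\
  (upstep alpha m -> ~~ upstep alpha m.+1 -> Cs I m.+1 = Hs I m.+1) /\
  (~~ upstep alpha m -> upstep alpha m.+1 -> Cs I m.+1 = Ls I - Hs I m.+1).
Proof.
move=> hI h0 hn.
have LI : forall J, J \in fingraph.orbit (@rowmotion alpha) I -> _ :=
  fun J hJ => local_id m (orbit_ideal hI hJ) h0 hn.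
have eP : Cs I m.+1 = \sum_(J <- fingraph.orbit (@rowmotion alpha) I) chi alpha m.+1 (rowmotion alpha J).
  by rewrite /Cs (orbit_shift (fun J => chi alpha m.+1 J) hI).
rewrite /Hs /Ls; split; [|split; [|split]].
- move=> u0 u1; split.
    rewrite /Cs -sumrB; apply: eq_big_seq => J hJ; exact: ((LI J hJ).1 u0 u1).1.
  rewrite eP -sumrB; apply: eq_big_seq => J hJ; exact: ((LI J hJ).1 u0 u1).2.
- move=> u0 u1; split.
    rewrite /Cs -sumrB; apply: eq_big_seq => J hJ; exact: ((LI J hJ).2.1 u0 u1).1.
  rewrite eP -sumrB; apply: eq_big_seq => J hJ; exact: ((LI J hJ).2.1 u0 u1).2.
- move=> u0 u1.
  rewrite /Cs; apply: eq_big_seq => J hJ; exact: ((LI J hJ).2.2.1 u0 u1).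
- move=> u0 u1.
  rewrite eP -sumrB; apply: eq_big_seq => J hJ; exact: ((LI J hJ).2.2.2 u0 u1).
Qed.

Lemma Hs0 (alpha : seq nat) (I : {set elt alpha}) : Hs I 0 = Ls I.
Proof. by rewrite /Hs /Ls; apply: eq_bigr => J _; rewrite /inJ eqxx. Qed.

Lemma Hstop (alpha : seq nat) (I : {set elt alpha}) : Hs I (fence_n alpha).+1 = 0.
Proof. by rewrite /Hs big1 // => J _; rewrite /inJ /= lab_top. Qed.

Lemma Ls_size (alpha : seq nat) (I : {set elt alpha}) :
  Ls I = (size (fingraph.orbit (@rowmotion alpha) I))%:R.
Proof.
rewrite /Ls; elim: (fingraph.orbit _ _) => [|x s IH]; first by rewrite big_nil.
by rewrite big_cons IH /= mulrS.
Qed.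

Lemma energy (g : nat -> rat) (N : nat) : g 0%N = 0 -> g N.+1 = 0 ->
  (forall k, (0 < k <= N)%N -> g k * (g k *+ 2 - g k.-1 - g k.+1) = 0) ->
  forall k, (k <= N.+1)%N -> g k = 0.
Proof.
move=> g0 gN h.
pose D k := g k.+1 - g k.
have E : forall m, (0 < m <= N.+1)%N -> \sum_(k < m) D k ^+ 2 = g m * D m.-1.
  elim=> [|m IH] // hm.
  case: m IH hm => [|m] IH hm.
    by rewrite big_ord1 /D g0 subr0 expr2.
  rewrite big_ord_recr /= IH; last by lia.
  have hk := h m.+1 (ltac:(lia)).
  move: hk; rewrite /D /= => hk.
  apply/eqP; rewrite -subr_eq0; apply/eqP; rewrite -hk; ring.
have S0 : \sum_(k < N.+1) D k ^+ 2 = 0.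
  rewrite (E N.+1); [by rewrite gN mul0r | lia].
have D0 : forall k, (k < N.+1)%N -> D k = 0.
  move=> k hk.
  have := @psumr_eq0P _ _ predT (fun i : 'I_N.+1 => D i ^+ 2) (fun i _ => sqr_ge0 _) S0 (Ordinal hk) isT.
  by move/eqP; rewrite sqrf_eq0 => /eqP.
elim=> // k IH hk.
have := D0 k hk; rewrite /D IH; last by lia.
by rewrite subr0.
Qed.

Lemma algebra_core (n : nat) (up : nat -> bool) (H C : nat -> rat) (L : rat) :
  up 0%N -> (forall j, (j <= n)%N -> up (n - j)%N = up j) ->
  H 0%N = L -> H n.+1 = 0 ->
  (forall m, (m < n)%N ->
    (up m -> up m.+1 -> C m.+1 = H m.+1 - H m.+2 /\ C m.+1 = H m - H m.+1) /\
    (~~ up m -> ~~ up m.+1 -> C m.+1 = H m.+1 - H m /\ C m.+1 = H m.+2 - H m.+1) /\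
    (up m -> ~~ up m.+1 -> C m.+1 = H m.+1) /\
    (~~ up m -> up m.+1 -> C m.+1 = L - H m.+1)) ->
  (forall m, (m < n)%N -> up m != up m.+1 -> C m.+1 = C (n - m)%N) ->
  forall m, (m < n)%N -> C m.+1 = C (n - m)%N /\ H m.+1 + H (n - m)%N = L.
Proof.
move=> up0 upm H0 Hn loc hyp.
pose g l := H l + H (n.+1 - l)%N - L.
have mir : forall m, (m < n)%N -> [/\ (n - m = (n - m.+1).+1)%N, up (n - m.+1)%N = up m.+1 &
                                      up (n - m.+1).+1 = up m].
  move=> m hm; have e : (n - m = (n - m.+1).+1)%N by lia.
  split => //; first by rewrite upm.
  by rewrite -e upm //; lia.
have gz : forall k, (k <= n.+1)%N -> g k = 0.
  apply: energy.
  - rewrite /g subn0 H0 Hn; lra.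
  - rewrite /g subnn H0 Hn; lra.
  case=> [//|m] /andP[_ hm].
  have hm' : (m < n)%N by lia.
  have [e1 e2 e3] := mir m hm'.
  set m' := (n - m.+1)%N in e1 e2 e3.
  have hm'' : (m' < n)%N by rewrite /m'; lia.
  have ga : g m.+1 = H m.+1 + H m'.+1 - L by rewrite /g subSS e1.
  have gb : g m.+1.-1 = H m + H m'.+2 - L.
    by rewrite /g /= (_ : (n.+1 - m = m'.+2)%N) //; rewrite /m'; lia.
  have gc : g m.+2 = H m.+2 + H m' - L.
    by rewrite /g (_ : (n.+1 - m.+2 = m')%N) //; rewrite /m'; lia.
  rewrite ga gb gc.
  have [l1 [l2 [l3 l4]]] := loc m hm'.
  have [k1 [k2 [k3 k4]]] := loc m' hm''.
  rewrite e2 e3 in k1 k2 k3 k4.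
  have hy := hyp m hm'; rewrite e1 in hy.
  case u0: (up m); case u1: (up m.+1).
  - have [a1 a2] := l1 u0 u1; have [b1 b2] := k1 u1 u0.
    apply/eqP; rewrite mulf_eq0; apply/orP; right; apply/eqP; lra.
  - have a := l3 u0 (negbT u1); have b := k4 (negbT u1) u0.
    have c := hy (ltac:(by rewrite u0 u1)).
    apply/eqP; rewrite mulf_eq0; apply/orP; left; apply/eqP; lra.
  - have a := l4 (negbT u0) u1; have b := k3 u1 (negbT u0).
    have c := hy (ltac:(by rewrite u0 u1)).
    apply/eqP; rewrite mulf_eq0; apply/orP; left; apply/eqP; lra.
  - have [a1 a2] := l2 (negbT u0) (negbT u1); have [b1 b2] := k2 (negbT u1) (negbT u0).
    apply/eqP; rewrite mulf_eq0; apply/orP; right; apply/eqP; lra.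
move=> m hm.
have [e1 e2 e3] := mir m hm.
set m' := (n - m.+1)%N in e1 e2 e3.
have hm'' : (m' < n)%N by rewrite /m'; lia.
have g1 : H m.+1 + H m'.+1 = L.
  have := gz m.+1 (ltac:(lia)); rewrite /g subSS e1; lra.
have g0 : H m + H m'.+2 = L.
  have := gz m (ltac:(lia)); rewrite /g (_ : (n.+1 - m = m'.+2)%N); last by rewrite /m'; lia.
  lra.
have g2 : H m.+2 + H m' = L.
  have := gz m.+2 (ltac:(lia)); rewrite /g (_ : (n.+1 - m.+2 = m')%N); last by rewrite /m'; lia.
  lra.
rewrite e1; split => //.
have [l1 [l2 [l3 l4]]] := loc m hm.
have [k1 [k2 [k3 k4]]] := loc m' hm''.
rewrite e2 e3 in k1 k2 k3 k4.
case u0: (up m); case u1: (up m.+1).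
- have [a1 a2] := l1 u0 u1; have [b1 b2] := k1 u1 u0; lra.
- have a := l3 u0 (negbT u1); have b := k4 (negbT u1) u0; lra.
- have a := l4 (negbT u0) u1; have b := k3 u1 (negbT u0); lra.
- have [a1 a2] := l2 (negbT u0) (negbT u1); have [b1 b2] := k2 (negbT u1) (negbT u0); lra.
Qed.

Lemma shared_idx (alpha : seq nat) m : (m < fence_n alpha)%N -> (0 < sumn alpha)%N ->
  upstep alpha m != upstep alpha m.+1 ->
  exists i, (1 <= i <= size alpha - 1)%N /\ fa alpha i = m.+1.
Proof.
rewrite /fence_n => hm S0 hd.
have hmS : (m < sumn alpha)%N by lia.
case: (@seg_exists alpha m hmS) => i [hi hs].
have e := @seg_type alpha m i hi hs.
case: (ltnP m.+1 (fa alpha i)) => h.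
  have hs' : (fa alpha i.-1 <= m.+1 < fa alpha i)%N by move: hs; lia.
  by move: hd; rewrite e (@seg_type alpha m.+1 i hi hs') eqxx.
have efa : fa alpha i = m.+1 by move: hs; lia.
exists i; split => //.
have : i != size alpha.
  apply/eqP => ei; move: efa; rewrite ei fa_size; lia.
move: hi; lia.
Qed.

Theorem theorem5p9_aux (alpha : seq nat) :
  fence_data alpha ->
  (forall i : nat, (i < size alpha)%N ->
     nth 0%N alpha i = nth 0%N alpha (size alpha - 1 - i)) ->
  odd (size alpha) ->
  (forall i : nat, (1 <= i <= size alpha - 1)%N ->
     mesic alpha (fun I => chi alpha (fa alpha i) I - chi alpha (fa alpha (size alpha - i)%N) I) 0) ->
  forall k : nat, (1 <= k <= fence_n alpha)%N ->
    mesic alpha (fun I => chi alpha k I - chi alpha (fence_n alpha - k + 1)%N I) 0 /\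
    mesic alpha (fun I => hatchi alpha k I + hatchi alpha (fence_n alpha - k + 1)%N I) 1.
Proof.
move=> [st apos hh hl] pal ot hyp k hk.
have Hr := pal_rev pal.
have S0 : (0 < sumn alpha)%N.
  by case: alpha st apos hh hl {pal Hr hyp hk ot} => [|a s] //= _ _ ha _; lia.
have up0 : upstep alpha 0.
  have h1 : (0 < 1 <= size alpha)%N by lia.
  have h2 : (fa alpha 1%N.-1 <= 0 < fa alpha 1)%N.
    by case: alpha st apos hh hl {pal Hr hyp hk S0 h1 ot} => [|a s] //= _ _ ha _; rewrite /fa /=; lia.
  by rewrite (@seg_type alpha 0 1 h1 h2).
have upn : upstep alpha (fence_n alpha).
  by rewrite -{1}(subn0 (fence_n alpha)) up_mirror.
set n := fence_n alpha in hk upn hyp *.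
have Lpos : forall I : {set elt alpha}, Ls I != 0.
  move=> I; rewrite Ls_size size_orbit pnatr_eq0 -lt0n; exact: order_gt0.
have key : forall I : {set elt alpha}, is_ideal alpha I ->
    forall m, (m < n)%N -> Cs I m.+1 = Cs I (n - m)%N /\ Hs I m.+1 + Hs I (n - m)%N = Ls I.
  move=> I hI.
  apply: (@algebra_core n (upstep alpha) (Hs I) (Cs I) (Ls I)).
  - exact: up0.
  - by move=> j hj; apply: up_mirror.
  - exact: Hs0.
  - exact: Hstop.
  - by move=> m hm; exact: (orbit_id (Ordinal hm) hI up0 upn).
  - move=> m hm hd.
    have [i [hi efa]] := shared_idx hm S0 hd.
    have := hyp i hi I hI.
    rewrite sumrB -/(Cs I (fa alpha i)) -/(Cs I (fa alpha (size alpha - i))).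
    rewrite -Ls_size => /eqP; rewrite mulf_eq0 invr_eq0 (negbTE (Lpos I)) orbF subr_eq0 => /eqP.
    have fm := @fa_mirror alpha Hr i (ltac:(lia)).
    have -> : fa alpha (size alpha - i) = (n - m)%N.
      by rewrite /n /fence_n; move: fm; rewrite efa; lia.
    by rewrite efa.
have [m [ek hm]] : exists m, k = m.+1 /\ (m < n)%N.
  by exists k.-1; split; lia.
have e2 : (n - k + 1 = n - m)%N by lia.
rewrite e2 ek; split => I hI; have [c1 c2] := key I hI m hm.
- rewrite sumrB -/(Cs I m.+1) -/(Cs I (n - m)) c1 subrr; exact: mul0r.
- have e3 : (n - m = (n - m.+1).+1)%N by lia.
  rewrite big_split /= -Ls_size.
  rewrite -/(Hs I m.+1) e3 -/(Hs I (n - m.+1).+1) -e3 c2.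
  exact: divff.
Qed.

Unset Implicit Arguments.
Set Strict Implicit.

Theorem theorem5p9 (alpha : seq nat) :
  fence_data alpha ->
  (forall i : nat, (i < size alpha)%N ->
     nth 0%N alpha i = nth 0%N alpha (size alpha - 1 - i)) ->
  odd (size alpha) ->
  (forall i : nat, (1 <= i <= size alpha - 1)%N ->
     mesic alpha (fun I => chi alpha (fa alpha i) I - chi alpha (fa alpha (size alpha - i)%N) I) 0) ->
  forall k : nat, (1 <= k <= fence_n alpha)%N ->
    mesic alpha (fun I => chi alpha k I - chi alpha (fence_n alpha - k + 1)%N I) 0 /\
    mesic alpha (fun I => hatchi alpha k I + hatchi alpha (fence_n alpha - k + 1)%N I) 1.
Proof. exact: theorem5p9_aux. Qed.
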